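(* Let $\epsilon$ be a primitive cube root of unity and, for $\mathbf{a}=(\alpha,\beta,\gamma)\in\mathbb{C}^3$, let $\mathcal{U}_{\mathbf{a}}\subset\mathbb{C}^4$ be the hypersurface $X^2-U^2=(Y-V+\alpha)(Y-\epsilon V+\beta)(Y-\epsilon^2V+\gamma)$. Then: (1) if $\alpha+\epsilon\beta+\epsilon^2\gamma=0$, $\mathcal{U}_{\mathbf{a}}$ has a unique singular point, which is analytically a cusp of the same type as $\mathcal{U}_0=\{X^2-U^2-Y^3+V^3=0\}$; (2) if $\alpha+\epsilon\beta+\epsilon^2\gamma\neq0$, $\mathcal{U}_{\mathbf{a}}$ has exactly three distinct singular points, all ordinary double points; (3) the family $\{\mathcal{U}_{\mathbf{a}}\}$ is the pull-back of the miniversal deformation $\{\mathcal{X}_\Lambda\}_{\Lambda\in T^1}$ of the cusp along a holomorphic map germ $g:(\mathbb{C}^3,0)\to(T^1,0)$ whose image is the curve $C=\{\sigma^3-27\lambda=\mu=\nu=0\}$; explicitly, up to a nonzero constant $k$, $g(\mathbf{a})=(-k^3s^3,0,0,-3ks)$ with $s=\alpha+\epsilon\beta+\epsilon^2\gamma$, in coordinates $(\lambda,\mu,\nu,\sigma)$.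
   Context: The miniversal deformation of the cusp $x^2-y^3=z^2-w^3$ is $\mathcal{X}_\Lambda=\{x^2-y^3-z^2+w^3+\lambda+\mu y-\nu w+\sigma yw=0\}$, $\Lambda=(\lambda,\mu,\nu,\sigma)\in T^1\cong\mathbb{C}^4$. The cusp equation factors as $(X-U)(X+U)=(Y-V)(Y-\epsilon V)(Y-\epsilon^2V)$. *)

(* Defs.v *)
From HB Require Import structures.
From mathcomp Require Import all_boot all_order all_algebra.
Set Implicit Arguments. Unset Strict Implicit. Unset Printing Implicit Defensive.
Import Order.TTheory GRing.Theory Num.Theory.
Local Open Scope ring_scope.

Section MPoly4.
Variable R : comNzRingType.

Definition mpoly4 := {poly {poly {poly {poly R}}}}.

Definition mc (c : R) : mpoly4 := c%:P%:P%:P%:P.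

(* the variables: X_3 is the outermost, X_0 the innermost *)
Definition mX (i : 'I_4) : mpoly4 :=
  match val i with
  | 0 => 'X%:P%:P%:P
  | 1 => 'X%:P%:P
  | 2 => 'X%:P
  | _ => 'X
  end.

Definition meval (p : mpoly4) (x : 'rV[R]_4) : R :=
  p.[(x 0 3)%:P%:P%:P].[(x 0 2)%:P%:P].[(x 0 1)%:P].[x 0 0].

Definition mpd (i : 'I_4) (p : mpoly4) : mpoly4 :=
  match val i with
  | 0 => map_poly (map_poly (map_poly deriv)) p
  | 1 => map_poly (map_poly deriv) p
  | 2 => map_poly deriv p
  | _ => deriv p
  end.

Definition msing (f : mpoly4) (x : 'rV[R]_4) : Prop :=
  meval f x = 0 /\ forall i : 'I_4, meval (mpd i f) x = 0.

Definition mhess (f : mpoly4) (x : 'rV[R]_4) : 'M[R]_4 :=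
  \matrix_(i < 4, j < 4) meval (mpd i (mpd j f)) x.

Definition odp (f : mpoly4) (x : 'rV[R]_4) : Prop :=
  msing f x /\ \det (mhess f x) != 0.

(* Coordinates (X, Y, U, V) = (X_0, X_1, X_2, X_3); a = (alpha, beta, gamma).
   U_a : X^2 - U^2 = (Y - V + alpha)(Y - eps V + beta)(Y - eps^2 V + gamma) *)
Definition Ua (eps : R) (a : 'rV[R]_3) : mpoly4 :=
  mX 0 ^+ 2 - mX 2 ^+ 2
  - (mX 1 - mX 3 + mc (a 0 0))
    * (mX 1 - mc eps * mX 3 + mc (a 0 1))
    * (mX 1 - mc (eps ^+ 2) * mX 3 + mc (a 0 2)).

Definition sfun (eps : R) (a : 'rV[R]_3) : R :=
  a 0 0 + eps * a 0 1 + eps ^+ 2 * a 0 2.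

(* Miniversal deformation, coordinates (x, y, z, w) = (X_0, ..., X_3),
   Lambda = (lambda, mu, nu, sigma) = (L 0 0, L 0 1, L 0 2, L 0 3):
   x^2 - y^3 - z^2 + w^3 + lambda + mu y - nu w + sigma y w *)
Definition Xmv (L : 'rV[R]_4) : mpoly4 :=
  mX 0 ^+ 2 - mX 1 ^+ 3 - mX 2 ^+ 2 + mX 3 ^+ 3
  + mc (L 0 0) + mc (L 0 1) * mX 1 - mc (L 0 2) * mX 3
  + mc (L 0 3) * mX 1 * mX 3.

Definition gmap (k eps : R) (a : 'rV[R]_3) : 'rV[R]_4 :=
  let s := sfun eps a in
  \row_(i < 4) nth 0 [:: - (k ^+ 3 * s ^+ 3); 0; 0; - (3%:R * k * s)] i.

Definition onC (L : 'rV[R]_4) : Prop :=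
  L 0 3 ^+ 3 - 27%:R * L 0 0 = 0 /\ L 0 1 = 0 /\ L 0 2 = 0.

End MPoly4.

(* Main.v *)
Require Import Defs.
From HB Require Import structures.
From mathcomp Require Import all_boot all_order all_algebra.
From mathcomp Require Import ring.
Import Order.TTheory GRing.Theory Num.Theory.
Local Open Scope ring_scope.
Set Implicit Arguments. Unset Strict Implicit. Unset Printing Implicit Defensive.

Section Gen.
Variable R : comNzRingType.

Definition isDer (S : nzRingType) (D : S -> S) :=
  [/\ D 0 = 0, forall a b, D (a + b) = D a + D b &
      forall a b, D (a * b) = D a * b + a * D b].

Lemma isDer_deriv (S : comNzRingType) : isDer (@deriv S).
Proof. split; [exact: deriv0 | exact: derivD | exact: derivM]. Qed.

Lemma isDer1 (S : nzRingType) (D : S -> S) : isDer D -> D 1 = 0.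
Proof.
case=> D0 DD DM; have := DM 1 1; rewrite !mul1r mulr1 => /eqP.
by rewrite -subr_eq0 opprD addrA subrr sub0r oppr_eq0 => /eqP.
Qed.

Lemma isDerN (S : nzRingType) (D : S -> S) : isDer D -> forall a, D (- a) = - D a.
Proof.
case=> D0 DD DM a; apply/eqP; rewrite -subr_eq0 opprK -DD; first by rewrite addNr D0.
Qed.

Lemma isDer_map (S : comNzRingType) (D : S -> S) : isDer D -> isDer (map_poly D).
Proof.
move=> [D0 DD DM]; split.
- by rewrite map_poly0.
- move=> p q; apply/polyP => i; by rewrite coefD !coef_map_id0 // coefD DD.
- move=> p q; apply/polyP => i.
  rewrite coefD !coefM !coef_map_id0 // coefM.
  rewrite (big_morph D DD D0) -big_split /=; apply: eq_bigr => j _.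
  by rewrite DM !coef_map_id0.
Qed.

Lemma map_der_C (S : nzRingType) (D : S -> S) (a : S) : D 0 = 0 -> map_poly D a%:P = (D a)%:P.
Proof. move=> D0; apply/polyP=> i; rewrite coef_map_id0 // !coefC; by case: (i == 0%N). Qed.

Lemma map_der_X (S : nzRingType) (D : S -> S) : D 0 = 0 -> D 1 = 0 -> map_poly D 'X = 0.
Proof. move=> D0 D1; apply/polyP=> i; rewrite coef_map_id0 // coefX coef0; by case: (i == 1%N). Qed.

Lemma mpd_der (i : 'I_4) : isDer (@mpd R i).
Proof.
rewrite /mpd; case: (val i) => [|[|[|n]]];
 by do ? apply: isDer_map; apply: isDer_deriv.
Qed.

Lemma mpdD i (p q : mpoly4 R) : mpd i (p + q) = mpd i p + mpd i q.
Proof. by case: (mpd_der i). Qed.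
Lemma mpdM i (p q : mpoly4 R) : mpd i (p * q) = mpd i p * q + p * mpd i q.
Proof. by case: (mpd_der i). Qed.
Lemma mpdN i (p : mpoly4 R) : mpd i (- p) = - mpd i p.
Proof. exact: isDerN (mpd_der i) p. Qed.
Lemma mpdB i (p q : mpoly4 R) : mpd i (p - q) = mpd i p - mpd i q.
Proof. by rewrite mpdD mpdN. Qed.

Lemma map_der_X' (S : nzRingType) (D : S -> S) : isDer D -> map_poly D 'X = 0.
Proof. move=> hD; apply: map_der_X; [by case: hD | exact: isDer1]. Qed.
Lemma map_der_C' (S : nzRingType) (D : S -> S) (a : S) : isDer D -> map_poly D a%:P = (D a)%:P.
Proof. by case=> D0 _ _; apply: map_der_C. Qed.

Ltac derok := repeat apply: isDer_map; apply: isDer_deriv.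

Lemma mpd_mc i (c : R) : mpd i (mc c) = 0.
Proof.
rewrite /mpd /mc; case: (val i) => [|[|[|n]]];
  rewrite ?map_der_C' ?derivC ?polyC0 //; derok.
Qed.

Ltac derok2 := match goal with |- isDer _ => derok end.

Ltac dstep := match goal with
| |- context [map_poly ?D 'X] => rewrite (@map_der_X' _ D); last derok
| |- context [map_poly ?D (?a%:P)] => let T := type of a in rewrite (@map_der_C' T D a); last derok
| |- context [deriv (?a%:P)] => let T := type of a in rewrite (@derivC T a)
| |- context [@deriv ?T 'X] => rewrite (@derivX T)
end.

Lemma mc0 : mc 0 = 0 :> mpoly4 R.
Proof. by rewrite /mc (@polyC0 R) (@polyC0 {poly R}) (@polyC0 {poly {poly R}}) (@polyC0 {poly {poly {poly R}}}). Qed.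
Lemma mc1 : mc 1 = 1 :> mpoly4 R.
Proof. by rewrite /mc (@polyC1 R) (@polyC1 {poly R}) (@polyC1 {poly {poly R}}) (@polyC1 {poly {poly {poly R}}}). Qed.

Lemma Z1 : (0 : {poly {poly {poly R}}})%:P = 0 :> mpoly4 R. Proof. exact: (@polyC0 {poly {poly {poly R}}}). Qed.
Lemma Z2 : ((0 : {poly {poly R}})%:P)%:P = 0 :> mpoly4 R.
Proof. by rewrite (@polyC0 {poly {poly R}}) (@polyC0 {poly {poly {poly R}}}). Qed.
Lemma O1 : (1 : {poly {poly {poly R}}})%:P = 1 :> mpoly4 R. Proof. exact: (@polyC1 {poly {poly {poly R}}}). Qed.
Lemma O2 : ((1 : {poly {poly R}})%:P)%:P = 1 :> mpoly4 R.
Proof. by rewrite (@polyC1 {poly {poly R}}) (@polyC1 {poly {poly {poly R}}}). Qed.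
Lemma O3 : (((1 : {poly R})%:P)%:P)%:P = 1 :> mpoly4 R.
Proof. by rewrite (@polyC1 {poly R}) (@polyC1 {poly {poly R}}) (@polyC1 {poly {poly {poly R}}}). Qed.

Lemma mpd_mX (i j : 'I_4) : mpd i (@mX R j) = mc (i == j)%:R.
Proof.
case: i => [[|[|[|[|//]]]] Hi]; case: j => [[|[|[|[|//]]]] Hj];
 rewrite /mpd /mX /=.
all: do 4 try dstep.
all: rewrite ?mc0 ?mc1.
all: match goal with
| |- (((_)%:P)%:P)%:P = _ => exact: O3
| |- ((_)%:P)%:P = 0 => exact: Z2
| |- ((_)%:P)%:P = 1 => exact: O2
| |- (_)%:P = 0 => exact: Z1
| |- (_)%:P = 1 => exact: O1
| _ => reflexivity
end.
Qed.



Lemma mevalD (p q : mpoly4 R) x : meval (p + q) x = meval p x + meval q x.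
Proof. by rewrite /meval !hornerD. Qed.
Lemma mevalN (p : mpoly4 R) x : meval (- p) x = - meval p x.
Proof. by rewrite /meval !hornerN. Qed.
Lemma mevalB (p q : mpoly4 R) x : meval (p - q) x = meval p x - meval q x.
Proof. by rewrite /meval !hornerD !hornerN. Qed.
Lemma mevalM (p q : mpoly4 R) x : meval (p * q) x = meval p x * meval q x.
Proof. by rewrite /meval !hornerM. Qed.
Lemma meval_mc (c : R) x : meval (mc c) x = c.
Proof. by rewrite /meval /mc !hornerC. Qed.
Lemma meval_mX i x : meval (@mX R i) x = x 0 i.
Proof.
case: i => [[|[|[|[|//]]]] Hi]; rewrite /meval /mX /=.
- rewrite !hornerC hornerX; congr (x 0 _); exact/val_inj.
- rewrite !hornerC hornerX hornerC; congr (x 0 _); exact/val_inj.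
- rewrite hornerC hornerX !hornerC; congr (x 0 _); exact/val_inj.
- rewrite hornerX !hornerC; congr (x 0 _); exact/val_inj.
Qed.
End Gen.

Section Gen2.
Variable R : comNzRingType.
Lemma mpdX2 i (p : mpoly4 R) : mpd i (p ^+ 2) = mpd i p * p + p * mpd i p.
Proof. by rewrite expr2 mpdM. Qed.
Lemma mevalX (p : mpoly4 R) n x : meval (p ^+ n) x = meval p x ^+ n.
Proof. by rewrite /meval !horner_exp. Qed.
Lemma meval_mpd_mc i (c : R) x : meval (mpd i (mc c)) x = 0.
Proof. by rewrite mpd_mc -[0 : mpoly4 R]mc0 meval_mc. Qed.
End Gen2.

Ltac simp := rewrite ?(mpdD, mpdB, mpdN, mpdM, mpdX2, mpd_mc, mpd_mX);
  rewrite ?(mevalD, mevalB, mevalN, mevalM, mevalX, meval_mc, meval_mX) /=.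

Section Refl.
Variable R : comNzRingType.
Inductive tm := TV of 'I_4 | TC of R | TA of tm & tm | TN of tm | TM of tm & tm | TX of tm & nat.

Fixpoint den (t : tm) : mpoly4 R :=
  match t with
  | TV i => mX R i | TC c => mc c | TA s u => den s + den u | TN s => - den s
  | TM s u => den s * den u | TX s n => den s ^+ n end.

Fixpoint ev (x : 'rV[R]_4) (t : tm) : R :=
  match t with
  | TV i => x 0 i | TC c => c | TA s u => ev x s + ev x u | TN s => - ev x s
  | TM s u => ev x s * ev x u | TX s n => ev x s ^+ n end.

Fixpoint dt (i : 'I_4) (t : tm) : tm :=
  match t with
  | TV j => TC (i == j)%:R | TC _ => TC 0 | TA s u => TA (dt i s) (dt i u)
  | TN s => TN (dt i s) | TM s u => TA (TM (dt i s) u) (TM s (dt i u))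
  | TX s n => (fix dx m := match m with 0 => TC 0
                 | m'.+1 => TA (TM (dt i s) (TX s m')) (TM s (dx m')) end) n
  end.

Lemma ev_den t x : meval (den t) x = ev x t.
Proof.
elim: t => [i|c|s IHs u IHu|s IHs|s IHs u IHu|s IHs n] /=.
- exact: meval_mX.
- exact: meval_mc.
- by rewrite mevalD IHs IHu.
- by rewrite mevalN IHs.
- by rewrite mevalM IHs IHu.
- by rewrite mevalX IHs.
Qed.

Lemma mpd_den i t : mpd i (den t) = den (dt i t).
Proof.
elim: t => [j|c|s IHs u IHu|s IHs|s IHs u IHu|s IHs n] /=.
- exact: mpd_mX.
- by rewrite mpd_mc mc0.
- by rewrite mpdD IHs IHu.
- by rewrite mpdN IHs.
- by rewrite mpdM IHs IHu.
- elim: n => [|n IHn] /=.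
  + rewrite (@expr0 (mpoly4 R)) mc0; exact: (isDer1 (@mpd_der R i)).
  + by rewrite (@exprS (mpoly4 R)) mpdM IHs IHn.
Qed.
End Refl.



Lemma ordcases (P : 'I_4 -> Prop) : P 0 -> P 1 -> P 2 -> P 3 -> forall i, P i.
Proof.
move=> p0 p1 p2 p3 [[|[|[|[|//]]]] Hi].
- by have -> : Ordinal Hi = 0 by apply/val_inj.
- by have -> : Ordinal Hi = 1 by apply/val_inj.
- by have -> : Ordinal Hi = 2 by apply/val_inj.
- by have -> : Ordinal Hi = 3 by apply/val_inj.
Qed.

Lemma row4_eq (R : Type) (x y : 'rV[R]_4) :
  x 0 0 = y 0 0 -> x 0 1 = y 0 1 -> x 0 2 = y 0 2 -> x 0 3 = y 0 3 -> x = y.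
Proof.
move=> h0 h1 h2 h3; apply/rowP; apply: ordcases => //.
Qed.

Lemma sum3 (R : comNzRingType) (F : 'I_3 -> R) : \sum_(i < 3) F i = F 0 + F 1 + F 2.
Proof.
rewrite !big_ord_recl big_ord0 addr0 addrA.
have -> : lift ord0 ord0 = 1 :> 'I_3 by apply/val_inj.
by have -> : lift ord0 (lift ord0 ord0) = 2 :> 'I_3 by apply/val_inj.
Qed.

Definition ordI (m : nat) : 'I_4 := match m with 0 => 0 | 1 => 1 | 2 => 2 | _ => 3 end.
Lemma ordIK (i : 'I_4) : ordI i = i.
Proof. by move: i; apply: ordcases. Qed.

Lemma mhess_eq (R : comNzRingType) (f : mpoly4 R) x :
  mhess f x = \matrix_(i < 4, j < 4) meval (mpd (ordI i) (mpd (ordI j) f)) x.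
Proof. by apply/matrixP => i j; rewrite !mxE !ordIK. Qed.

Lemma det4 (R : comNzRingType) (f : nat -> nat -> R) :
  f 0 1 = 0 -> f 0 2 = 0 -> f 0 3 = 0 -> f 2 1 = 0 -> f 2 3 = 0 ->
  \det (\matrix_(i < 4, j < 4) f i j) = f 0 0 * f 2 2 * (f 1 1 * f 3 3 - f 1 3 * f 3 1).
Proof.
move=> h1 h2 h3 h4 h5.
rewrite (expand_det_row _ ord0) !big_ord_recl big_ord0 /cofactor !mxE /= h1 h2 h3 !mul0r !addr0.
rewrite (expand_det_row _ (lift ord0 ord0)) !big_ord_recl big_ord0 /cofactor !mxE /= h4 h5 !mul0r !addr0 add0r.
rewrite (expand_det_row _ ord0) !big_ord_recl big_ord0 /cofactor !det_mx11 !mxE /=.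
ring.
Qed.

Definition mkpt (R : nzRingType) (y v : R) : 'rV[R]_4 := \row_(i < 4) nth 0 [:: 0; y; 0; v] i.
Lemma mkpt0 (R : nzRingType) (y v : R) : mkpt y v 0 0 = 0. Proof. by rewrite mxE. Qed.
Lemma mkpt1 (R : nzRingType) (y v : R) : mkpt y v 0 1 = y. Proof. by rewrite mxE. Qed.
Lemma mkpt2 (R : nzRingType) (y v : R) : mkpt y v 0 2 = 0. Proof. by rewrite mxE. Qed.
Lemma mkpt3 (R : nzRingType) (y v : R) : mkpt y v 0 3 = v. Proof. by rewrite mxE. Qed.

Section Formulas.
Variable R : comNzRingType.
Variables (eps : R) (a : 'rV[R]_3).

Definition tUa : tm R :=
  TA (TA (TX (TV _ 0) 2) (TN (TX (TV _ 2) 2)))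
   (TN (TM (TM (TA (TA (TV _ 1) (TN (TV _ 3))) (TC (a 0 0)))
               (TA (TA (TV _ 1) (TN (TM (TC eps) (TV _ 3)))) (TC (a 0 1))))
               (TA (TA (TV _ 1) (TN (TM (TC (eps ^+ 2)) (TV _ 3)))) (TC (a 0 2))))).
Lemma Ua_den : Ua eps a = den tUa.
Proof. reflexivity. Qed.

Definition Lg (c d : R) (x : 'rV[R]_4) := x 0 1 - c * x 0 3 + d.
Definition L1 := Lg 1 (a 0 0).
Definition L2 := Lg eps (a 0 1).
Definition L3 := Lg (eps ^+ 2) (a 0 2).

Lemma FU x : meval (Ua eps a) x = x 0 0 ^+ 2 - x 0 2 ^+ 2 - L1 x * L2 x * L3 x.
Proof. rewrite Ua_den ev_den /= /L1 /L2 /L3 /Lg; ring. Qed.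
Lemma F0 x : meval (mpd 0 (Ua eps a)) x = 2 * x 0 0.
Proof. rewrite Ua_den mpd_den ev_den /=; ring. Qed.
Lemma F2 x : meval (mpd 2 (Ua eps a)) x = - (2 * x 0 2).
Proof. rewrite Ua_den mpd_den ev_den /=; ring. Qed.
Lemma F1 x : meval (mpd 1 (Ua eps a)) x = - (L2 x * L3 x + L1 x * L3 x + L1 x * L2 x).
Proof. rewrite Ua_den mpd_den ev_den /= /L1 /L2 /L3 /Lg; ring. Qed.
Lemma F3 x : meval (mpd 3 (Ua eps a)) x = L2 x * L3 x + eps * (L1 x * L3 x) + eps ^+ 2 * (L1 x * L2 x).
Proof. rewrite Ua_den mpd_den ev_den /= /L1 /L2 /L3 /Lg; ring. Qed.

Definition hg x (m n : nat) := meval (mpd (ordI m) (mpd (ordI n) (Ua eps a))) x.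
Ltac hsolve := rewrite /hg Ua_den !mpd_den ev_den /= ?/L1 ?/L2 ?/L3 ?/Lg; ring.
Lemma H01 x : hg x 0 1 = 0. Proof. hsolve. Qed.
Lemma H02 x : hg x 0 2 = 0. Proof. hsolve. Qed.
Lemma H03 x : hg x 0 3 = 0. Proof. hsolve. Qed.
Lemma H21 x : hg x 2 1 = 0. Proof. hsolve. Qed.
Lemma H23 x : hg x 2 3 = 0. Proof. hsolve. Qed.
Lemma H00 x : hg x 0 0 = 2. Proof. hsolve. Qed.
Lemma H22 x : hg x 2 2 = -2. Proof. hsolve. Qed.
Lemma H11 x : hg x 1 1 = - (2 * (L1 x + L2 x + L3 x)). Proof. hsolve. Qed.
Lemma H33 x : hg x 3 3 = - (2 * (eps * L3 x + eps ^+ 2 * L2 x + eps ^+ 3 * L1 x)). Proof. hsolve. Qed.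
Lemma H13 x : hg x 1 3 = (1 + eps) * L3 x + (1 + eps ^+ 2) * L2 x + (eps + eps ^+ 2) * L1 x. Proof. hsolve. Qed.
Lemma H31 x : hg x 3 1 = (1 + eps) * L3 x + (1 + eps ^+ 2) * L2 x + (eps + eps ^+ 2) * L1 x. Proof. hsolve. Qed.

Lemma det_hess x : \det (mhess (Ua eps a) x) =
  2 * -2 * ((- (2 * (L1 x + L2 x + L3 x))) * (- (2 * (eps * L3 x + eps ^+ 2 * L2 x + eps ^+ 3 * L1 x)))
   - ((1 + eps) * L3 x + (1 + eps ^+ 2) * L2 x + (eps + eps ^+ 2) * L1 x) ^+ 2).
Proof.
rewrite mhess_eq (det4 (H01 x) (H02 x) (H03 x) (H21 x) (H23 x)).
rewrite -/(hg x 0 0) -/(hg x 2 2) -/(hg x 1 1) -/(hg x 3 3) -/(hg x 1 3) -/(hg x 3 1).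
rewrite H00 H22 H11 H33 H13 H31 expr2 //.
Qed.
End Formulas.



Section Main.
Variable R : numClosedFieldType.
Variable eps : R.
Hypothesis heps : 3.-primitive_root eps.

Lemma e3 : eps ^+ 3 = 1.
Proof. exact: prim_expr_order heps. Qed.
Lemma ne1 : eps != 1.
Proof. by apply/negP => /eqP E; have := prim_order_dvd heps 1; rewrite expr1 E eqxx. Qed.
Lemma e2ne1 : eps ^+ 2 != 1.
Proof. by apply/negP => /eqP E; have := prim_order_dvd heps 2; rewrite E eqxx. Qed.
Lemma ne0 : eps != 0.
Proof. by apply/negP => /eqP E; have := e3; rewrite E expr0n /= => /eqP; rewrite eq_sym oner_eq0. Qed.
Lemma hsum : 1 + eps + eps ^+ 2 = 0.
Proof.
have : (eps - 1) * (1 + eps + eps ^+ 2) = 0.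
  transitivity (eps ^+ 3 - 1); first by ring.
  by rewrite e3 subrr.
by move/eqP; rewrite mulf_eq0 subr_eq0 (negbTE ne1) /= => /eqP.
Qed.
Lemma ne12 : eps != eps ^+ 2.
Proof.
apply/negP => /eqP E.
have : eps * (eps - 1) = 0 by rewrite mulrBr mulr1 -expr2 -E subrr.
by move/eqP; rewrite mulf_eq0 subr_eq0 (negbTE ne0) (negbTE ne1).
Qed.
Lemma n2 : 2 != 0 :> R. Proof. by rewrite pnatr_eq0. Qed.
Lemma n3 : 3 != 0 :> R. Proof. by rewrite pnatr_eq0. Qed.

Lemma Lsum a x : L1 a x + eps * L2 eps a x + eps ^+ 2 * L3 eps a x = sfun eps a.
Proof.
transitivity (sfun eps a + (1 + eps + eps ^+ 2) * x 0 1
   - ((1 + eps + eps ^+ 2) + eps * (eps ^+ 3 - 1)) * x 0 3).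
  by rewrite /L1 /L2 /L3 /Lg /sfun; ring.
by rewrite hsum e3 subrr; ring.
Qed.

Lemma pt_exists (c c' d d' : R) : c != c' ->
  exists y v, Lg c d (mkpt y v) = 0 /\ Lg c' d' (mkpt y v) = 0.
Proof.
move=> hc; have hc0 : c - c' != 0 by rewrite subr_eq0.
exists (c * ((d - d') / (c - c')) - d), ((d - d') / (c - c')).
rewrite /Lg mkpt1 mkpt3; split; first by ring.
transitivity ((c - c') * ((d - d') / (c - c')) - (d - d')); first by ring.
by rewrite mulrC divfK // subrr.
Qed.

Lemma uniq_pt (c c' d d' : R) (x p : 'rV[R]_4) : c != c' ->
  x 0 0 = 0 -> x 0 2 = 0 -> p 0 0 = 0 -> p 0 2 = 0 ->
  Lg c d x = 0 -> Lg c' d' x = 0 -> Lg c d p = 0 -> Lg c' d' p = 0 -> x = p.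
Proof.
move=> hc hx0 hx2 hp0 hp2 h1 h2 h3 h4.
have h3eq : x 0 3 = p 0 3.
  have : (c' - c) * (x 0 3 - p 0 3) = 0.
    transitivity ((Lg c d x - Lg c' d' x) - (Lg c d p - Lg c' d' p)); first by rewrite /Lg; ring.
    by rewrite h1 h2 h3 h4 !subrr.
  by move/eqP; rewrite mulf_eq0 !subr_eq0 eq_sym (negbTE hc) /= => /eqP.
apply: row4_eq; rewrite ?hx0 ?hp0 ?hx2 ?hp2 //.
have : Lg c d x - Lg c d p = x 0 1 - p 0 1 by rewrite /Lg h3eq; ring.
by rewrite h1 h3 subrr => /eqP; rewrite eq_sym subr_eq0 => /eqP.
Qed.

Lemma msing_basic a x : msing (Ua eps a) x ->
  [/\ x 0 0 = 0, x 0 2 = 0, L1 a x * L2 eps a x * L3 eps a x = 0 &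
      L2 eps a x * L3 eps a x + L1 a x * L3 eps a x + L1 a x * L2 eps a x = 0].
Proof.
case=> hU hd.
have h0 : x 0 0 = 0.
  by have := hd 0; rewrite F0 => /eqP; rewrite mulf_eq0 (negbTE n2) /= => /eqP.
have h2 : x 0 2 = 0.
  by have := hd 2; rewrite F2 => /eqP; rewrite oppr_eq0 mulf_eq0 (negbTE n2) /= => /eqP.
split => //.
  by move: hU; rewrite FU h0 h2 expr2 mul0r subrr sub0r => /eqP; rewrite oppr_eq0 => /eqP.
by have := hd 1; rewrite F1 => /eqP; rewrite oppr_eq0 => /eqP.
Qed.

Lemma msing_of a (x : 'rV[R]_4) : x 0 0 = 0 -> x 0 2 = 0 ->
  L1 a x * L2 eps a x * L3 eps a x = 0 ->
  L2 eps a x * L3 eps a x + L1 a x * L3 eps a x + L1 a x * L2 eps a x = 0 ->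
  L2 eps a x * L3 eps a x + eps * (L1 a x * L3 eps a x) + eps ^+ 2 * (L1 a x * L2 eps a x) = 0 ->
  msing (Ua eps a) x.
Proof.
move=> h0 h2 hp h1 h3; split.
  by rewrite FU h0 h2 hp; ring.
apply: ordcases.
- by rewrite F0 h0 mulr0.
- by rewrite F1 h1 oppr0.
- by rewrite F2 h2 mulr0 oppr0.
- by rewrite F3.
Qed.


Lemma sq0 (c z : R) : c != 0 -> c * z * z = 0 -> z = 0.
Proof. by move=> hc /eqP; rewrite !mulf_eq0 (negbTE hc) orbb => /eqP. Qed.

Lemma mul0_eq (c u : R) : c != 0 -> c * u = 0 -> u = 0.
Proof. by move=> hc /eqP; rewrite mulf_eq0 (negbTE hc) => /eqP. Qed.

Lemma allzero (l1 l2 l3 : R) : l1 * l2 * l3 = 0 ->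
  l2 * l3 + l1 * l3 + l1 * l2 = 0 -> l1 + eps * l2 + eps ^+ 2 * l3 = 0 ->
  [/\ l1 = 0, l2 = 0 & l3 = 0].
Proof.
move=> hp h1 hs.
have e2 : eps ^+ 2 != 0 by rewrite expf_eq0 (negbTE ne0) andbF.
have me : - eps != 0 by rewrite oppr_eq0 ne0.
have me2 : - eps ^+ 2 != 0 by rewrite oppr_eq0 e2.
move/eqP: hp; rewrite !mulf_eq0 -orbA => /or3P [] /eqP hz.
- have a2 : l2 + eps * l3 = 0.
    apply: (mul0_eq ne0); transitivity (l1 + eps * l2 + eps ^+ 2 * l3); last exact: hs.
    by rewrite hz; ring.
  have l30 : l3 = 0.
    apply: (sq0 me); transitivity ((l2 * l3 + l1 * l3 + l1 * l2) - l3 * (l2 + eps * l3) - l1 * (l3 + l2)).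
      by ring.
    by rewrite h1 a2 hz; ring.
  split => //; move: a2; rewrite l30 mulr0 addr0 //.
- have a2 : l1 + eps ^+ 2 * l3 = 0.
    transitivity (l1 + eps * l2 + eps ^+ 2 * l3); last exact: hs.
    by rewrite hz; ring.
  have l30 : l3 = 0.
    apply: (sq0 me2); transitivity ((l2 * l3 + l1 * l3 + l1 * l2) - l3 * (l1 + eps ^+ 2 * l3) - l2 * (l3 + l1)).
      by ring.
    by rewrite h1 a2 hz; ring.
  split => //; move: a2; rewrite l30 mulr0 addr0 //.
- have a2 : l1 + eps * l2 = 0.
    transitivity (l1 + eps * l2 + eps ^+ 2 * l3); last exact: hs.
    by rewrite hz; ring.
  have l20 : l2 = 0.
    apply: (sq0 me); transitivity ((l2 * l3 + l1 * l3 + l1 * l2) - l2 * (l1 + eps * l2) - l3 * (l2 + l1)).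
      by ring.
    by rewrite h1 a2 hz; ring.
  split => //; move: a2; rewrite l20 mulr0 addr0 //.
Qed.


Lemma p1a a y v : L1 a (mkpt y v) = 0 -> L2 eps a (mkpt y v) = 0 -> L3 eps a (mkpt y v) = 0 ->
  forall x : 'rV[R]_4, meval (Ua eps a) x = 1 * meval (Ua eps 0) ((x - mkpt y v) *m 1%:M).
Proof.
move=> hL1' hL2' hL3 x; rewrite mul1r mulmx1.
apply: (etrans (FU eps a x)); rewrite (FU eps 0 (x - mkpt y v)).
have ha0 : a 0 0 = v - y.
  by apply/eqP; rewrite -subr_eq0; apply/eqP; rewrite -hL1' /L1 /Lg mkpt1 mkpt3; ring.
have ha1 : a 0 1 = eps * v - y.
  by apply/eqP; rewrite -subr_eq0; apply/eqP; rewrite -hL2' /L2 /Lg mkpt1 mkpt3; ring.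
have ha2 : a 0 2 = eps ^+ 2 * v - y.
  by apply/eqP; rewrite -subr_eq0; apply/eqP; rewrite -hL3 /L3 /Lg mkpt1 mkpt3; ring.
rewrite /L1 /L2 /L3 /Lg !mxE /= ha0 ha1 ha2.
ring.
Qed.

Lemma part1 a : sfun eps a = 0 ->
     exists p : 'rV[R]_4,
       (forall x, msing (Ua eps a) x <-> x = p) /\
       exists (c : R) (A : 'M[R]_4), [/\ c != 0, A \in unitmx &
         forall x, meval (Ua eps a) x = c * meval (Ua eps 0) ((x - p) *m A)].
Proof.
move=> hs.
have n1e : 1 != eps by rewrite eq_sym ne1.
have [y [v [hL1 hL2]]] := pt_exists (a 0 0) (a 0 1) n1e.
have hL1' : L1 a (mkpt y v) = 0 := hL1.
have hL2' : L2 eps a (mkpt y v) = 0 := hL2.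
have e2 : eps ^+ 2 != 0 by rewrite expf_eq0 (negbTE ne0) andbF.
have hL3 : L3 eps a (mkpt y v) = 0.
  apply: (mul0_eq e2); have := Lsum a (mkpt y v).
  by rewrite hs hL1' hL2' mulr0 add0r add0r.
exists (mkpt y v); split.
  move=> x; split.
    case/msing_basic => h0 h2 hp h1.
    have := Lsum a x; rewrite hs => hsx.
    have [z1 z2 z3] := allzero hp h1 hsx.
    apply: (uniq_pt (c := 1) (c' := eps) (d := a 0 0) (d' := a 0 1) n1e) => //.
    by rewrite mkpt0. by rewrite mkpt2.
  move=> ->; apply: msing_of; rewrite ?mkpt0 ?mkpt2 ?hL1' ?hL2' ?hL3; ring.
exists 1, 1%:M; split; [exact: oner_neq0 | exact: unitmx1 | exact: p1a].
Qed.

Lemma nz4 (u : R) : u != 0 -> 4 * u ^+ 2 != 0.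
Proof. by move=> hu; rewrite mulf_neq0 ?expf_neq0 // pnatr_eq0. Qed.

Lemma part2 a : sfun eps a != 0 ->
     exists p1 p2 p3 : 'rV[R]_4,
       [/\ p1 != p2, p1 != p3, p2 != p3,
           (forall x, msing (Ua eps a) x <-> [\/ x = p1, x = p2 | x = p3]) &
           [/\ odp (Ua eps a) p1, odp (Ua eps a) p2 & odp (Ua eps a) p3]].
Proof.
move=> hs.
have n1e : 1 != eps by rewrite eq_sym ne1.
have n1e2 : 1 != eps ^+ 2 by rewrite eq_sym e2ne1.
have [y1 [v1 [hA1 hA2]]] := pt_exists (a 0 0) (a 0 1) n1e.
have [y2 [v2 [hB1 hB3]]] := pt_exists (a 0 0) (a 0 2) n1e2.
have [y3 [v3 [hC2 hC3]]] := pt_exists (a 0 1) (a 0 2) ne12.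
set P12 := mkpt y1 v1. set P13 := mkpt y2 v2. set P23 := mkpt y3 v3.
have hA1' : L1 a P12 = 0 := hA1.
have hA2' : L2 eps a P12 = 0 := hA2.
have hB1' : L1 a P13 = 0 := hB1.
have hB3' : L3 eps a P13 = 0 := hB3.
have hC2' : L2 eps a P23 = 0 := hC2.
have hC3' : L3 eps a P23 = 0 := hC3.
have hA3 : L3 eps a P12 != 0.
  apply/eqP => E; have := Lsum a P12; rewrite hA1' hA2' E !mulr0 !addr0 => hs0.
  by move: hs; rewrite -hs0 eqxx.
have hB2 : L2 eps a P13 != 0.
  apply/eqP => E; have := Lsum a P13; rewrite hB1' hB3' E !mulr0 !addr0 => hs0.
  by move: hs; rewrite -hs0 eqxx.
have hC1 : L1 a P23 != 0.
  apply/eqP => E; have := Lsum a P23; rewrite hC2' hC3' E !mulr0 !addr0 => hs0.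
  by move: hs; rewrite -hs0 eqxx.
have s12 : msing (Ua eps a) P12.
  apply: msing_of; rewrite ?mkpt0 ?mkpt2 ?hA1' ?hA2'; ring.
have s13 : msing (Ua eps a) P13.
  apply: msing_of; rewrite ?mkpt0 ?mkpt2 ?hB1' ?hB3'; ring.
have s23 : msing (Ua eps a) P23.
  apply: msing_of; rewrite ?mkpt0 ?mkpt2 ?hC2' ?hC3'; ring.
exists P12, P13, P23; split.
- apply/eqP => E; move/eqP: hA3; apply; by rewrite E.
- apply/eqP => E; move/eqP: hC1; apply; by rewrite -E.
- apply/eqP => E; move/eqP: hC1; apply; by rewrite -E.
- move=> x; split; last by case=> ->.
  case/msing_basic => h0 h2 hp h1.
  have U12 : L1 a x = 0 -> L2 eps a x = 0 -> x = P12 := fun z1 z2 =>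
    uniq_pt (c := 1) (c' := eps) (d := a 0 0) (d' := a 0 1) n1e h0 h2 (mkpt0 _ _) (mkpt2 _ _) z1 z2 hA1 hA2.
  have U13 : L1 a x = 0 -> L3 eps a x = 0 -> x = P13 := fun z1 z2 =>
    uniq_pt (c := 1) (c' := eps ^+ 2) (d := a 0 0) (d' := a 0 2) n1e2 h0 h2 (mkpt0 _ _) (mkpt2 _ _) z1 z2 hB1 hB3.
  have U23 : L2 eps a x = 0 -> L3 eps a x = 0 -> x = P23 := fun z1 z2 =>
    uniq_pt (c := eps) (c' := eps ^+ 2) (d := a 0 1) (d' := a 0 2) ne12 h0 h2 (mkpt0 _ _) (mkpt2 _ _) z1 z2 hC2 hC3.
  move/eqP: hp; rewrite !mulf_eq0 -orbA => /or3P [] /eqP z.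
  + have : L2 eps a x * L3 eps a x = 0 by move: h1; rewrite z !mul0r !addr0.
    move/eqP; rewrite mulf_eq0 => /orP [] /eqP z'.
      by constructor 1; apply: U12.
    by constructor 2; apply: U13.
  + have : L1 a x * L3 eps a x = 0 by move: h1; rewrite z !mul0r mulr0 add0r addr0.
    move/eqP; rewrite mulf_eq0 => /orP [] /eqP z'.
      by constructor 1; apply: U12.
    by constructor 3; apply: U23.
  + have : L1 a x * L2 eps a x = 0 by move: h1; rewrite z !mulr0 !add0r.
    move/eqP; rewrite mulf_eq0 => /orP [] /eqP z'.
      by constructor 2; apply: U13.
    by constructor 3; apply: U23.
- split; split => //.
  + rewrite (det_hess eps a P12) hA1' hA2'.
    set l := L3 eps a P12.
    have -> : 2 * -2 * (- (2 * (0 + 0 + l)) * - (2 * (eps * l + eps ^+ 2 * 0 + eps ^+ 3 * 0)) -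
       ((1 + eps) * l + (1 + eps ^+ 2) * 0 + (eps + eps ^+ 2) * 0) ^+ 2) = 4 * ((1 - eps) * l) ^+ 2 by ring.
    by apply: nz4; rewrite mulf_neq0 // subr_eq0.
  + rewrite (det_hess eps a P13) hB1' hB3'.
    set l := L2 eps a P13.
    have -> : 2 * -2 * (- (2 * (0 + l + 0)) * - (2 * (eps * 0 + eps ^+ 2 * l + eps ^+ 3 * 0)) -
       ((1 + eps) * 0 + (1 + eps ^+ 2) * l + (eps + eps ^+ 2) * 0) ^+ 2) = 4 * ((1 - eps ^+ 2) * l) ^+ 2 by ring.
    by apply: nz4; rewrite mulf_neq0 // subr_eq0.
  + rewrite (det_hess eps a P23) hC2' hC3'.
    set l := L1 a P23.
    have -> : 2 * -2 * (- (2 * (l + 0 + 0)) * - (2 * (eps * 0 + eps ^+ 2 * 0 + eps ^+ 3 * l)) -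
       ((1 + eps) * 0 + (1 + eps ^+ 2) * 0 + (eps + eps ^+ 2) * l) ^+ 2) = 4 * (eps * (1 - eps) * l) ^+ 2 by ring.
    by apply: nz4; rewrite !mulf_neq0 ?ne0 // subr_eq0.
Qed.

Definition tXmv (L : 'rV[R]_4) : tm R :=
  TA (TA (TA (TA (TA (TA (TA (TX (TV _ 0) 2) (TN (TX (TV _ 1) 3))) (TN (TX (TV _ 2) 2))) (TX (TV _ 3) 3))
    (TC (L 0 0))) (TM (TC (L 0 1)) (TV _ 1))) (TN (TM (TC (L 0 2)) (TV _ 3))))
    (TM (TM (TC (L 0 3)) (TV _ 1)) (TV _ 3)).
Lemma Xmv_den (L : 'rV[R]_4) : Xmv L = den (tXmv L).
Proof. reflexivity. Qed.
Lemma FX (L y : 'rV[R]_4) : meval (Xmv L) y = y 0 0 ^+ 2 - y 0 1 ^+ 3 - y 0 2 ^+ 2 + y 0 3 ^+ 3 + L 0 0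
   + L 0 1 * y 0 1 - L 0 2 * y 0 3 + L 0 3 * y 0 1 * y 0 3.
Proof. rewrite Xmv_den ev_den /=; ring. Qed.

Lemma cubic (y w t : R) : (y - w + t) * (y - eps * w + eps ^+ 2 * t) * (y - eps ^+ 2 * w + eps * t)
  = y ^+ 3 - w ^+ 3 + t ^+ 3 + 3 * y * w * t.
Proof.
apply/eqP; rewrite -subr_eq0; apply/eqP.
transitivity ((1 + eps + eps ^+ 2) * (y - w + t) *
  (- (w + t) ^+ 2 + t * (y + (1 + eps) * w + eps * t) - w * (y - eps * w - (1 + eps) * t)
   - (1 + eps + eps ^+ 2) * t * w)); first by ring.
by rewrite hsum !mul0r.
Qed.

Lemma diff0 (u v : R) : v - u = 0 -> u = v.
Proof. by move/eqP; rewrite subr_eq0 => /eqP. Qed.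

Lemma part3 : exists k : R, k != 0 /\
     (exists (c : R) (A : 'M[R]_4) (B : 'M[R]_(3, 4)),
        [/\ c != 0, A \in unitmx &
          forall (a : 'rV[R]_3) (x : 'rV[R]_4),
            meval (Ua eps a) x = c * meval (Xmv (gmap k eps a)) (x *m A + a *m B)]) /\
     (forall L : 'rV[R]_4, (exists a : 'rV[R]_3, gmap k eps a = L) <-> onC L).
Proof.
pose k : R := 3^-1.
have hk : 3 * k = 1 by rewrite /k mulfV // n3.
exists k; split; first by rewrite /k invr_neq0 // n3.
split.
  exists 1, 1%:M, (\matrix_(i < 3, j < 4) nth 0 (nth [::] [:: [:: 0; k; 0; - k];
       [:: 0; k; 0; - (eps ^+ 2 * k)]; [:: 0; k; 0; - (eps * k)]] i) j).
  split; [exact: oner_neq0 | exact: unitmx1 | ].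
  move=> a x; rewrite mul1r mulmx1.
  apply: (etrans (FU eps a x)).
  rewrite (FX (gmap k eps a) (x + a *m _)).
  rewrite !mxE !sum3 !mxE /=.
  set Y := x 0 1 + _.
  set V := x 0 3 + _.
  set t := k * sfun eps a.
  have hL1 : L1 a x = Y - V + t.
    apply: diff0; transitivity (a 0 0 * (3 * k - 1) + k * (a 0 1 + a 0 2) * (1 + eps + eps ^+ 2)).
      by rewrite /Y /V /t /L1 /Lg /sfun; ring.
    by rewrite hk hsum; ring.
  have hL2 : L2 eps a x = Y - eps * V + eps ^+ 2 * t.
    apply: diff0; transitivity (k * a 0 0 * (1 + eps + eps ^+ 2) + a 0 1 * (3 * k - 1)
        + 2 * k * a 0 1 * (eps ^+ 3 - 1) + k * a 0 2 * (1 + eps + eps ^+ 2 + eps * (eps ^+ 3 - 1))).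
      by rewrite /Y /V /t /L2 /Lg /sfun; ring.
    by rewrite hk hsum e3; ring.
  have hL3 : L3 eps a x = Y - eps ^+ 2 * V + eps * t.
    apply: diff0; transitivity (k * a 0 0 * (1 + eps + eps ^+ 2)
        + k * a 0 1 * (1 + eps + eps ^+ 2 + eps * (eps ^+ 3 - 1))
        + a 0 2 * (3 * k - 1) + 2 * k * a 0 2 * (eps ^+ 3 - 1)).
      by rewrite /Y /V /t /L3 /Lg /sfun; ring.
    by rewrite hk hsum e3; ring.
  rewrite hL1 hL2 hL3 cubic /t.
  ring.
move=> L; split.
  case=> b <-; rewrite /onC /gmap !mxE /=; split => //.
  ring.
case=> hC [h1 h2].
exists (\row_(i < 3) nth 0 [:: - L 0 3; 0; 0] i).
apply: row4_eq; rewrite /gmap /sfun !mxE /= ?h1 ?h2 //.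
  transitivity ((3 * k) ^+ 3 * L 0 0 + k ^+ 3 * (L 0 3 ^+ 3 - 27 * L 0 0)); first by ring.
  by rewrite hk hC; ring.
transitivity ((3 * k) * L 0 3); first by ring.
by rewrite hk mul1r.
Qed.
End Main.

Theorem mainTheorem7 (R : numClosedFieldType) (eps : R)
  (heps : 3.-primitive_root eps) :
  (* (1) s = 0: unique singular point, equivalent to the cusp U_0 at 0 *)
  (forall a : 'rV[R]_3, sfun eps a = 0 ->
     exists p : 'rV[R]_4,
       (forall x, msing (Ua eps a) x <-> x = p) /\
       exists (c : R) (A : 'M[R]_4), [/\ c != 0, A \in unitmx &
         forall x, meval (Ua eps a) x = c * meval (Ua eps 0) ((x - p) *m A)])
  /\
  (* (2) s <> 0: exactly three distinct singular points, all ordinary double points *)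
  (forall a : 'rV[R]_3, sfun eps a != 0 ->
     exists p1 p2 p3 : 'rV[R]_4,
       [/\ p1 != p2, p1 != p3, p2 != p3,
           (forall x, msing (Ua eps a) x <-> [\/ x = p1, x = p2 | x = p3]) &
           [/\ odp (Ua eps a) p1, odp (Ua eps a) p2 & odp (Ua eps a) p3]])
  /\
  (* (3) U is the pull-back of the miniversal deformation along g, image of g = C *)
  (exists k : R, k != 0 /\
     (exists (c : R) (A : 'M[R]_4) (B : 'M[R]_(3, 4)),
        [/\ c != 0, A \in unitmx &
          forall (a : 'rV[R]_3) (x : 'rV[R]_4),
            meval (Ua eps a) x = c * meval (Xmv (gmap k eps a)) (x *m A + a *m B)]) /\
     (forall L : 'rV[R]_4, (exists a : 'rV[R]_3, gmap k eps a = L) <-> onC L)).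
Proof.
split; first exact: (@part1 R eps heps).
split; first exact: (@part2 R eps heps).
exact: (@part3 R eps heps).
Qed.
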